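(* Let $\rho$ be a worst-case risk measure that uses an uncertainty set $\mathcal{U}\subseteq\mathbb{R}^K$ such that $\mathcal{U}\subseteq\mathcal{A}(\mathcal{U})$. Then $\rho$ satisfies the bounded conditional market risk property.
   Context: Returns $r\in\mathbb{R}^K$ with natural filtration $\mathcal{F}_k=\sigma(r_1,\dots,r_k)$; investment amounts $\zeta_\ell$ are $\mathcal{F}_\ell$-measurable functions of $r_{1:\ell}$. The worst-case risk measure with uncertainty set $\mathcal{U}$ is $\rho=\rho_0\circ\cdots\circ\rho_{K-1}$ where $\rho_k(X,r)=\sup_{r'\in\mathcal{U}:r'_{1:k}=r_{1:k}}X(r')$ if some $r'\in\mathcal{U}$ has $r'_{1:k}=r_{1:k}$, and otherwise $\rho_k(X,r)=X([r_{1:k};0_{k+1:K}])$ (i.e. $\inf_{\epsilon>0}\operatorname{ess\,sup}$ of $X$ over $r'$ with $r'_{1:k}=r_{1:k}$, $\|r'_{k+1:K}\|_\infty\le\epsilon$). Let $\rho_{k,K}=\rho_k\circ\cdots\circ\rho_{K-1}$. Define $\mathcal{A}(\mathcal{U})=\{r\in\mathbb{R}^K:\forall k\in\{0,\dots,K-1\},\ \inf_{\zeta_k,\dots,\zeta_{K-1}}\rho_{k,K}(-\sum_{\ell=k}^{K-1}\zeta_\ell r_{\ell+1},r)\in(-\infty,0]\}$. Bounded conditional market risk: for each $k\in\{0,\dots,K-1\}$, $0\ge\inf_{\zeta_k,\dots,\zeta_{K-1}}\rho_{k,K}(-\sum_{\ell=k}^{K-1}\zeta_\ell r_{\ell+1})>-\infty$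 almost surely. *)

(* Defs.v *)
From HB Require Import structures.
From mathcomp Require Import all_boot all_order all_algebra.
From mathcomp Require Import all_classical all_reals all_analysis.
Unset Printing Implicit Defensive.
Import Order.TTheory GRing.Theory Num.Theory.
Import numFieldNormedType.Exports.
Local Open Scope classical_set_scope.
Local Open Scope ring_scope.

(* A return vector r in R^K is a row vector 'rV[R]_K with coordinates r ord0 i; the paper's (1-indexed)
   r_{l+1} is the 0-indexed coordinate r ord0 l, and r_{1:k} is (r ord0 i)_{i < k}. *)
Notation retvec R K := 'rV[R]_K.

(* Generators of the natural filtration F_l = sigma(r_1,...,r_l):
   the sets {r | r_i in A}, i < l (0-indexed), A Borel in R. *)
Definition filt_gen (R : realType) (K l : nat) : set (set (retvec R K)) :=
  [set E | exists (i : 'I_K) (A : set R),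
      (i < l)%N /\ measurable A /\ E = (fun r : retvec R K => r ord0 i) @^-1` A].

Definition filt (R : realType) (K l : nat) : set (set (retvec R K)) :=
  <<s filt_gen R K l >>.

Notation Omega R K := (g_sigma_algebraType (filt_gen R K K)).

(* Investment strategies: zeta l is F_l-measurable (for every l). *)
Definition adapted {R : realType} {K : nat} (zeta : nat -> retvec R K -> R) :=
  forall (l : nat) (B : set R), measurable B -> filt R K l (zeta l @^-1` B).

Definition agree {R : realType} {K : nat} (k : nat) (r r' : retvec R K) :=
  forall i : 'I_K, (i < k)%N -> r' ord0 i = r ord0 i.

Definition trunc {R : realType} {K : nat} (k : nat) (r : retvec R K) : retvec R K :=
  \row_(i < K) (if (i < k)%N then r ord0 i else 0).

Definition rho_k {R : realType} {K : nat} (U : set (retvec R K)) (k : nat)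
    (X : retvec R K -> \bar R) : retvec R K -> \bar R :=
  fun r => if pselect (exists r', U r' /\ agree k r r')
           then ereal_sup [set X r' | r' in [set r' | U r' /\ agree k r r']]
           else X (trunc k r).

Definition rho_kK {R : realType} {K : nat} (U : set (retvec R K)) (k : nat)
    (X : retvec R K -> \bar R) : retvec R K -> \bar R :=
  foldr (fun j Y => rho_k U j Y) X (iota k (K - k)).

Definition rho_wc {R : realType} {K : nat} (U : set (retvec R K)) :=
  rho_kK U 0.

Definition neg_gain {R : realType} {K : nat} (k : nat)
    (zeta : nat -> retvec R K -> R) : retvec R K -> \bar R :=
  fun r => (- \sum_(i < K | (k <= i)%N) zeta i r * r ord0 i)%:E.

Definition min_risk {R : realType} {K : nat} (U : set (retvec R K)) (k : nat)
    (r : retvec R K) : \bar R :=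
  ereal_inf [set rho_kK U k (neg_gain k zeta) r | zeta in @adapted R K].

Definition AU {R : realType} {K : nat} (U : set (retvec R K)) : set (retvec R K) :=
  [set r | forall k : nat, (k < K)%N ->
     (-oo < min_risk U k r)%E /\ (min_risk U k r <= 0)%E].

Definition bounded_cond_market_risk {R : realType} {K : nat}
    (U : set (retvec R K)) (P : probability (Omega R K) R) :=
  forall k : nat, (k < K)%N ->
    {ae P, forall r : Omega R K, (min_risk U k r <= 0)%E /\ (-oo < min_risk U k r)%E}.

(* Main.v *)
Require Import Defs.
From HB Require Import structures.
From mathcomp Require Import all_boot all_order all_algebra.
From mathcomp Require Import all_classical all_reals all_analysis.
Import numFieldNormedType.Exports.
Import Order.TTheory GRing.Theory Num.Theory.
Local Open Scope classical_set_scope.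
Local Open Scope ring_scope.

Section S.
Variables (R : realType) (K : nat) (U : set (retvec R K)).

Lemma agree_trans {k} {r u s : retvec R K} : agree k r u -> agree k u s -> agree k r s.
Proof. by move=> h1 h2 i hi; rewrite h2 // h1. Qed.

Lemma agree_sym {k} {r u : retvec R K} : agree k r u -> agree k u r.
Proof. by move=> h i hi; rewrite h. Qed.

Lemma rho_k_agree k (Y : retvec R K -> \bar R) r u :
  agree k r u -> rho_k U k Y r = rho_k U k Y u.
Proof.
move=> hru; rewrite /rho_k.
have E : [set r' | U r' /\ agree k r r'] = [set r' | U r' /\ agree k u r'].
  apply/seteqP; split => x /= [Ux hx]; split => //.
    exact: agree_trans (agree_sym hru) hx.
  exact: agree_trans hru hx.
case: pselect => [h1|h1]; case: pselect => [h2|h2].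
- by rewrite E.
- by exfalso; apply: h2; case: h1 => x [Ux hx]; exists x; split => //;
    exact: agree_trans (agree_sym hru) hx.
- by exfalso; apply: h1; case: h2 => x [Ux hx]; exists x; split => //;
    exact: agree_trans hru hx.
- congr Y; apply/matrixP => i j; rewrite !mxE ord1; case: ifP => // hi.
  by rewrite hru.
Qed.

Lemma rho_kK_S k X : (k < K)%N -> rho_kK U k X = rho_k U k (rho_kK U k.+1 X).
Proof.
move=> hk; rewrite /rho_kK.
have -> : (K - k = (K - k.+1).+1)%N by rewrite subnSK.
by [].
Qed.

Lemma rho_kK_agree k X r u : (k < K)%N -> agree k r u ->
  rho_kK U k X r = rho_kK U k X u.
Proof. by move=> hk hru; rewrite rho_kK_S //; apply: rho_k_agree. Qed.

Lemma min_risk_agree k r u : (k < K)%N -> agree k r u ->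
  min_risk U k r = min_risk U k u.
Proof.
move=> hk hru; rewrite /min_risk; congr ereal_inf.
apply/seteqP; split => x /= [z hz <-]; exists z => //.
  by rewrite (rho_kK_agree _ _ _ _ hk hru).
by rewrite (rho_kK_agree _ _ _ _ hk hru).
Qed.

Lemma rho_kK_noU X : forall n j (s : retvec R K), (K - j)%N = n -> (j <= K)%N ->
  ~ (exists u, U u /\ agree j s u) ->
  exists s', agree j s s' /\ (forall i : 'I_K, (j <= i)%N -> s' ord0 i = 0)
     /\ rho_kK U j X s = X s'.
Proof.
elim => [|n IH] j s hn hj hno.
  have hjK : j = K by apply/eqP; rewrite eqn_leq hj /= -subn_eq0 hn.
  exists s; split => //; split.
    by move=> i; rewrite hjK leqNgt ltn_ord.
  by rewrite /rho_kK hn.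
have hjK : (j < K)%N by rewrite -subn_gt0 hn.
have hno' : ~ (exists u, U u /\ agree j.+1 (trunc j s) u).
  case => u [Uu hu]; apply: hno; exists u; split => //.
  move=> i hi; rewrite (hu i (ltnW hi)).
  by rewrite /trunc mxE hi.
have hn' : (K - j.+1)%N = n by rewrite subnS hn.
have [s' [h1 [h2 h3]]] := IH j.+1 (trunc j s) hn' hjK hno'.
exists s'; split; last split.
- move=> i hi; rewrite h1; last exact: ltnW.
  by rewrite /trunc mxE hi.
- move=> i; rewrite leq_eqVlt => /orP [/eqP hi|hi]; last exact: h2.
  by rewrite h1 /trunc ?mxE -hi ?ltnn // ltnSn.
- rewrite rho_kK_S // /rho_k; case: pselect => // _.
Qed.

End S.
Arguments min_risk_agree {R K U k r u}.
Arguments rho_kK_noU {R K U} X n j s.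

Theorem lemma7 (R : realType) (K : nat) (U : set (retvec R K))
    (P : probability (Omega R K) R) :
  U `<=` AU U -> bounded_cond_market_risk U P.
Proof.
move=> hU k hk; apply: aeW => r.
case: (pselect (exists u, U u /\ agree k r u)) => [[u [Uu hu]]|hno].
  rewrite (min_risk_agree hk hu); have [a b] := hU u Uu k hk; by split.
have h0 : forall zeta, rho_kK U k (neg_gain k zeta) r = 0%E.
  move=> zeta.
  have [s' [_ [h2 ->]]] := rho_kK_noU (neg_gain k zeta) _ k r (erefl _) (ltnW hk) hno.
  rewrite /neg_gain big1 ?oppr0 // => i hi; by rewrite h2 // mulr0.
have -> : min_risk U k r = 0%E.
  rewrite /min_risk.
  have -> : [set rho_kK U k (neg_gain k zeta) r | zeta in @adapted R K] = [set 0%E].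
    apply/seteqP; split => x /=.
      by case=> z _ <-; rewrite h0.
    move=> ->; exists (fun _ _ => 0) => //.
    move=> l B _; rewrite (preimage_cst (0:R) B); case: ifP => _.
      rewrite -(setD0 setT) /filt; apply: sigma_algebraCD; exact: sigma_algebra0.
    exact: sigma_algebra0.
  by rewrite ereal_inf1.
by split => //.
Qed.
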